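(* Let $(F_S,\iota)$ be an embedded local étale algebra, $\Gamma\subseteq\mathrm{PGL}_2(F_S)$ a plectic subgroup, $S_1\subseteq S$, and $U\subseteq\mathrm{PGL}_2(F_{S\setminus S_1})$ an open compact subgroup. Then the subgroup $\Gamma_U=\mathrm{pr}_{S_1}\big(\Gamma\cap(\mathrm{PGL}_2(F_{S_1})\times U)\big)\subseteq\mathrm{PGL}_2(F_{S_1})$ is plectic and $\mathcal L_{\Gamma,\mathfrak p}=\mathcal L_{\Gamma_U,\mathfrak p}$ for all $\mathfrak p\in S_1$.
   Context: Fix a prime $p$ and let $\mathbf{C}$ be the completion of an algebraic closure of $\mathbb{Q}_p$ or of $\mathbb{F}_p((T))$. An embedded local étale algebra $(F_S,\iota)$ consists of a finite non-empty set $S$, non-Archimedean local fields $F_\mathfrak p$ ($\mathfrak p\in S$) of residue characteristic $p$ and of the same characteristic as $\mathbf C$, and embeddings $\iota_\mathfrak p\colon F_\mathfrak p\hookrightarrow\mathbf C$ (so $\mathbb P^1(F_\mathfrak p)\subseteq\mathbb P^1(\mathbf C)$). For $T\subseteq S$ put $F_T=\prod_{\mathfrak p\in T}F_\mathfrak p$, $\mathbb P^1(\mathbf C_T)=\prod_{\mathfrak p\in T}\mathbb P^1(\mathbf C)$; $\mathrm{PGL}_2(F_T)=\prod_{\mathfrak p\in T}\mathrm{PGL}_2(F_\mathfrak p)$ acts componentwise by Möbius transformations on $\mathbb P^1(\mathbf C_T)$; $\mathrm{PGL}_2(F_S)=\mathrm{PGL}_2(F_{S_1})\times\mathrm{PGL}_2(F_{S\setminus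 S_1})$ and $\mathrm{pr}_{S_1}$ is the projection. For a subgroup $\Gamma\subseteq\mathrm{PGL}_2(F_T)$, $\mathcal L^T_\Gamma$ is the set of $x\in\mathbb P^1(\mathbf C_T)$ such that $\gamma_j(y)\to x$ for some $y$ and pairwise distinct $\gamma_j\in\Gamma$. $\Gamma$ is plectic if there are subsets $\mathcal L_{\Gamma,\mathfrak p}\subseteq\mathbb P^1(F_\mathfrak p)$, $\mathfrak p\in T$, with $\mathcal L^T_\Gamma=\bigcup_{\mathfrak p\in T}\big(\mathcal L_{\Gamma,\mathfrak p}\times\prod_{\mathfrak q\in T\setminus\{\mathfrak p\}}\mathbb P^1(\mathbf C)\big)$. *)

(* Defs.v *)
From mathcomp Require Import all_boot all_order all_algebra.
From mathcomp Require Import reals.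
Set Implicit Arguments. Unset Strict Implicit. Unset Printing Implicit Defensive.
Import Order.TTheory GRing.Theory Num.Theory.
Local Open Scope ring_scope.

Section Valued.
Variables (R : realType) (C : fieldType) (abs : C -> R).

Definition is_nonarch_abs : Prop :=
  [/\ forall x, 0 <= abs x, forall x, abs x = 0 <-> x = 0,
      forall x y, abs (x * y) = abs x * abs y &
      forall x y, abs (x + y) <= Num.max (abs x) (abs y)].

Definition cvgC (u : nat -> C) (l : C) : Prop :=
  forall e : R, 0 < e -> exists N, forall n, (N <= n)%N -> abs (u n - l) < e.

Definition cauchyC (u : nat -> C) : Prop :=
  forall e : R, 0 < e -> exists N, forall m n, (N <= m)%N -> (N <= n)%N ->
    abs (u m - u n) < e.

Definition completeC : Prop := forall u, cauchyC u -> exists l, cvgC u l.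

Definition alg_closedC : Prop :=
  forall P : {poly C}, (1 < size P)%N -> exists x, root P x.

Definition is_subfield (F : C -> Prop) : Prop :=
  [/\ F 0, F 1, (forall x y, F x -> F y -> F (x - y)),
      (forall x y, F x -> F y -> F (x * y)) &
      (forall x, F x -> x != 0 -> F x^-1)].

Definition seq_compact_in (K : C -> Prop) : Prop :=
  forall u : nat -> C, (forall n, K (u n)) ->
    exists phi : nat -> nat, (forall n, (phi n < phi n.+1)%N) /\
      exists l, K l /\ cvgC (u \o phi) l.

(* A non-Archimedean local field embedded (continuously) in C, identified with its
   image: a non-discrete, locally compact subfield of C.  Its residue
   characteristic and characteristic are then those of C. *)
Definition embedded_local_field (F : C -> Prop) : Prop :=
  [/\ is_subfield F, (exists x, F x /\ 0 < abs x < 1) &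
      exists r : R, 0 < r /\ seq_compact_in (fun x => F x /\ abs x <= r)].

Definition algebraic_over (K : C -> Prop) (x : C) : Prop :=
  exists P : {poly C}, [/\ P != 0, (forall i, K P`_i) & root P x].

(* C is (isomorphic to) the completion of an algebraic closure of Q_p or of
   F_p((T)): a complete algebraically closed non-Archimedean field of residue
   characteristic p in which the algebraic closure of some local subfield K0
   (a finite extension of Q_p, resp. F_p((T))) is dense. *)
Definition is_C_field (p : nat) : Prop :=
  [/\ is_nonarch_abs, completeC, alg_closedC, abs (p%:R) < 1 &
      exists K0, embedded_local_field K0 /\
        forall x (e : R), 0 < e -> exists y, algebraic_over K0 y /\ abs (x - y) < e].

(* P^1(C) = C + {infinity}; None is the point at infinity *)
Definition P1 := option C.

Definition chordal (x y : P1) : R :=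
  match x, y with
  | Some a, Some b => abs (a - b) / (Num.max 1 (abs a) * Num.max 1 (abs b))
  | Some a, None => (Num.max 1 (abs a))^-1
  | None, Some a => (Num.max 1 (abs a))^-1
  | None, None => 0
  end.

Definition cvgP1 (u : nat -> P1) (l : P1) : Prop :=
  forall e : R, 0 < e -> exists N, forall n, (N <= n)%N -> chordal (u n) l < e.

Definition mob (a b c d : C) (z : P1) : P1 :=
  match z with
  | Some w => if c * w + d == 0 then None else Some ((a * w + b) / (c * w + d))
  | None => if c == 0 then None else Some (a / c)
  end.

Definition inP1 (F : C -> Prop) (z : P1) : Prop :=
  match z with Some w => F w | None => True end.

Definition lift_at (F : C -> Prop) (a b c d : C) (g : P1 -> P1) : Prop :=
  [/\ F a, F b, F c, F d & a * d - b * c != 0] /\ g = mob a b c d.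

(* elements of PGL_2(F), identified with the Moebius transformations of P^1(C)
   they induce (the action is faithful) *)
Definition is_PGL2 (F : C -> Prop) (g : P1 -> P1) : Prop :=
  exists a b c d, lift_at F a b c d g.

Section Plectic.
Variables (S : finType) (F : S -> C -> Prop).

(* an element of PGL_2(F_T), T a subset of S, is a family indexed by S which is
   the identity outside T *)
Definition elt := S -> P1 -> P1.

Definition in_PGL2 (T : {set S}) (g : elt) : Prop :=
  (forall q, q \in T -> is_PGL2 (F q) (g q)) /\ (forall q, q \notin T -> g q = id).

Definition is_subgroup (T : {set S}) (G : elt -> Prop) : Prop :=
  [/\ (forall g, G g -> in_PGL2 T g), G (fun _ => id),
      (forall g h, G g -> G h -> G (fun q => g q \o h q)) &
      (forall g, G g -> exists h, G h /\ forall q, h q \o g q = id /\ g q \o h q = id)].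

(* points of P^1(C_T) are families x : S -> P1 whose coordinates outside T are
   ignored *)
Definition limset (T : {set S}) (G : elt -> Prop) (x : S -> P1) : Prop :=
  exists (y : S -> P1) (gam : nat -> elt),
    [/\ forall j, G (gam j), injective gam &
        forall q, q \in T -> cvgP1 (fun j => gam j q (y q)) (x q)].

Definition plectic_wit (T : {set S}) (G : elt -> Prop) (L : S -> P1 -> Prop) : Prop :=
  (forall q, q \in T -> forall z, L q z -> inP1 (F q) z) /\
  (forall x, limset T G x <-> exists2 q, q \in T & L q (x q)).

Definition plectic (T : {set S}) (G : elt -> Prop) : Prop :=
  is_subgroup T G /\ exists L, plectic_wit T G L.

(* topology of PGL_2(F_T) (quotient of GL_2), via convergent sequences *)
Definition cvg_PGL2 (T : {set S}) (g : nat -> elt) (g0 : elt) : Prop :=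
  forall q, q \in T -> exists (a b c d : nat -> C) (a0 b0 c0 d0 : C),
    [/\ forall n, lift_at (F q) (a n) (b n) (c n) (d n) (g n q),
        lift_at (F q) a0 b0 c0 d0 (g0 q) &
        [/\ cvgC a a0, cvgC b b0, cvgC c c0 & cvgC d d0]].

Definition open_in_PGL2 (T : {set S}) (U : elt -> Prop) : Prop :=
  forall g0, U g0 -> forall g : nat -> elt, (forall n, in_PGL2 T (g n)) ->
    cvg_PGL2 T g g0 -> exists N, forall n, (N <= n)%N -> U (g n).

Definition compact_in_PGL2 (T : {set S}) (U : elt -> Prop) : Prop :=
  forall g : nat -> elt, (forall n, U (g n)) ->
    exists phi : nat -> nat, (forall n, (phi n < phi n.+1)%N) /\
      exists2 g0, U g0 & cvg_PGL2 T (g \o phi) g0.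

Definition open_compact_subgroup (T : {set S}) (U : elt -> Prop) : Prop :=
  [/\ is_subgroup T U, open_in_PGL2 T U & compact_in_PGL2 T U].

Definition prS (T : {set S}) (g : elt) : elt :=
  fun q => if q \in T then g q else id.

Definition GammaU (S1 : {set S}) (G U : elt -> Prop) : elt -> Prop :=
  fun h => exists g, [/\ G g, U (prS (~: S1) g) & h = prS S1 g].

End Plectic.
End Valued.

(* Main.v *)
Require Import Defs.
From mathcomp Require Import all_boot all_order all_algebra.
From mathcomp Require Import reals.
From mathcomp Require Import ring lra.
From Stdlib Require Import FunctionalExtensionality ClassicalEpsilon Classical.
Set Implicit Arguments. Unset Strict Implicit. Unset Printing Implicit Defensive.
Import Order.TTheory GRing.Theory Num.Theory.
Local Open Scope ring_scope.


Lemma choiceT (A T : Type) (P : A -> T -> Prop) :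
  (forall n, exists t, P n t) -> exists f : A -> T, forall n, P n (f n).
Proof.
move=> h; exists (fun n => proj1_sig (constructive_indefinite_description _ (h n))).
by move=> n; case: (constructive_indefinite_description _ (h n)).
Qed.

Lemma incr_lt' (phi : nat -> nat) : (forall n, (phi n < phi n.+1)%N) ->
  forall i j, (i < j)%N -> (phi i < phi j)%N.
Proof.
move=> inc i; elim=> [//|j ih]; rewrite ltnS leq_eqVlt => /orP [/eqP ->|h] //.
exact: ltn_trans (ih h) (inc j).
Qed.

Lemma incr_inj (phi : nat -> nat) : (forall n, (phi n < phi n.+1)%N) -> injective phi.
Proof.
move=> inc i j e; case: (ltngtP i j) => // h.
  by have := incr_lt' inc h; rewrite e ltnn.
by have := incr_lt' inc h; rewrite e ltnn.
Qed.

Lemma extract (P : nat -> Prop) : (forall N, exists j, (N <= j)%N /\ P j) ->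
  exists phi : nat -> nat, (forall n, (phi n < phi n.+1)%N) /\ forall n, P (phi n).
Proof.
move=> h; have [pf hpf] := choiceT h.
pose phi := fix phi n := match n with 0 => pf 0 | n'.+1 => pf (phi n').+1 end.
have e : forall n, phi n.+1 = pf (phi n).+1 by [].
exists phi; split.
  by move=> n; rewrite e; case: (hpf (phi n).+1).
by case=> [|n]; [case: (hpf 0%N) | rewrite e; case: (hpf (phi n).+1)].
Qed.

Lemma ramsey (T : Type) (f : nat -> T) :
  (exists phi : nat -> nat, (forall n, (phi n < phi n.+1)%N) /\ injective (fun n => f (phi n))) \/
  (exists phi : nat -> nat, (forall n, (phi n < phi n.+1)%N) /\ forall n, f (phi n) = f (phi 0)).
Proof.
case: (classic (exists v, forall N, exists n, (N <= n)%N /\ f n = v)) => [[v hv]|hno].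
  right; have [phi [inc hp]] := extract hv; exists phi; split => // n.
  by rewrite !hp.
left.
have hB : forall v, exists N, forall n, (N <= n)%N -> f n <> v.
  move=> v; apply: NNPP => H; apply: hno; exists v => N; apply: NNPP => H2; apply: H.
  exists N => n hn e; apply: H2; by exists n.
have [Bf hBf] := choiceT hB.
pose st := fix st n := match n with
  | 0 => (0%N, Bf (f 0%N))
  | n'.+1 => let a' := maxn (st n').2 (st n').1.+1 in (a', maxn (st n').2 (Bf (f a'))) end.
have stS : forall n, st n.+1 = (maxn (st n).2 (st n).1.+1, maxn (st n).2 (Bf (f (maxn (st n).2 (st n).1.+1)))).
  by [].
have Bmono : forall i j, (i <= j)%N -> ((st i).2 <= (st j).2)%N.
  move=> i j /subnKC <-; elim: (j - i)%N => [|k ih]; first by rewrite addn0.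
  by rewrite addnS stS /=; apply: leq_trans ih (leq_maxl _ _).
have Bge : forall n, (Bf (f (st n).1) <= (st n).2)%N.
  by case=> [|n] //; rewrite stS /= leq_maxr.
have aS : forall n, ((st n).2 <= (st n.+1).1)%N /\ ((st n).1 < (st n.+1).1)%N.
  by move=> n; rewrite stS /= leq_maxl leq_maxr.
exists (fun n => (st n).1); split; first by move=> n; have [_ ?] := aS n.
have key : forall i j, (i < j)%N -> f (st j).1 <> f (st i).1.
  move=> i j ij; case: j ij => [//|j] ij; apply: hBf.
  apply: leq_trans (Bge i) _; apply: leq_trans (Bmono i j _) _; first by rewrite -ltnS.
  by have [? _] := aS j.
move=> i j /= e; case: (ltngtP i j) => // h.
  by have := key _ _ h; rewrite e.
by have := key _ _ h; rewrite e.
Qed.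


Section NA.
Variables (R : realType) (C : fieldType) (abs : C -> R).
Hypothesis habs : is_nonarch_abs abs.

Lemma abs_ge0 x : 0 <= abs x. Proof. by case: habs. Qed.
Lemma abs_eq0 x : abs x = 0 <-> x = 0. Proof. by case: habs. Qed.
Lemma absM x y : abs (x * y) = abs x * abs y. Proof. by case: habs. Qed.
Lemma absD x y : abs (x + y) <= Num.max (abs x) (abs y). Proof. by case: habs. Qed.
Lemma abs0 : abs 0 = 0. Proof. exact/abs_eq0. Qed.
Lemma abs_gt0 x : x != 0 -> 0 < abs x.
Proof. move=> nz; rewrite lt_def abs_ge0 andbT; apply/eqP=> /abs_eq0 h. by rewrite h eqxx in nz. Qed.
Lemma abs1 : abs 1 = 1.
Proof.
have h : abs 1 * abs 1 = 1 * abs 1 by rewrite -absM mulr1 mul1r.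
apply: (mulIf _ h); apply/eqP => /abs_eq0 /eqP; by rewrite oner_eq0.
Qed.
Lemma absN1 : abs (-1) = 1.
Proof.
have : abs (-1) ^+ 2 == 1 by rewrite expr2 -absM mulrNN mulr1 abs1.
rewrite sqrf_eq1 => /orP [/eqP //|/eqP h].
by have := abs_ge0 (-1); rewrite h ler0N1.
Qed.
Lemma absN x : abs (- x) = abs x.
Proof. by rewrite -mulN1r absM absN1 mul1r. Qed.
Lemma absB x y : abs (x - y) = abs (y - x).
Proof. by rewrite -absN opprB. Qed.
Lemma absV x : abs (x^-1) = (abs x)^-1.
Proof.
have [->|nz] := eqVneq x 0; first by rewrite invr0 abs0 invr0.
have h : abs x * abs x^-1 = 1 by rewrite -absM mulfV // abs1.
have ax : abs x != 0 by rewrite gt_eqF // abs_gt0.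
by apply: (mulfI ax); rewrite h mulfV.
Qed.
Lemma absDl x y e : abs x <= e -> abs y <= e -> abs (x + y) <= e.
Proof. move=> hx hy; apply: le_trans (absD x y) _; by rewrite ge_max hx hy. Qed.
Lemma absDlt x y e : abs x < e -> abs y < e -> abs (x + y) < e.
Proof. move=> hx hy; apply: le_lt_trans (absD x y) _; by rewrite gt_max hx hy. Qed.
Lemma absBl x y e : abs x <= e -> abs y <= e -> abs (x - y) <= e.
Proof. by move=> hx hy; apply: absDl; rewrite ?absN. Qed.
Lemma absBlt x y e : abs x < e -> abs y < e -> abs (x - y) < e.
Proof. by move=> hx hy; apply: absDlt; rewrite ?absN. Qed.
Lemma abs_le_max x y : abs y <= Num.max (abs (y - x)) (abs x).
Proof. by have := absD (y - x) x; rewrite subrK. Qed.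
Lemma abs_eq x y : abs (x - y) < abs x -> abs y = abs x.
Proof.
move=> h; apply/eqP; rewrite eq_le; apply/andP; split.
  have := abs_le_max x y; rewrite le_max => /orP [|//].
  by rewrite absB => /le_lt_trans /(_ h) /ltW.
have := abs_le_max y x; rewrite le_max => /orP [|//].
by move=> /le_lt_trans /(_ h); rewrite ltxx.
Qed.
Lemma abs_bound x y : abs (y - x) <= 1 -> abs y <= Num.max 1 (abs x).
Proof.
move=> h; apply: le_trans (abs_le_max x y) _.
by rewrite ge_max le_max h le_max lexx orbT.
Qed.

Lemma cvgC_cst (a : C) : cvgC abs (fun _ => a) a.
Proof. by move=> e e0; exists 0%N => n _; rewrite subrr abs0. Qed.

Lemma cvgC_sub (u : nat -> C) a (phi : nat -> nat) :
  (forall n, (phi n < phi n.+1)%N) -> cvgC abs u a -> cvgC abs (u \o phi) a.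
Proof.
move=> inc cu e e0; have [N hN] := cu e e0; exists N => n hn; apply: hN.
have : forall n, (n <= phi n)%N.
  by elim=> [//|k ih]; apply: leq_ltn_trans ih (inc k).
by move=> /(_ n) /(leq_trans hn).
Qed.

Lemma cvgC_D u v a b : cvgC abs u a -> cvgC abs v b -> cvgC abs (fun n => u n + v n) (a + b).
Proof.
move=> cu cv e e0; have [N1 h1] := cu e e0; have [N2 h2] := cv e e0.
exists (maxn N1 N2) => n; rewrite geq_max => /andP [n1 n2].
have -> : u n + v n - (a + b) = (u n - a) + (v n - b) by ring.
exact: absDlt (h1 _ n1) (h2 _ n2).
Qed.

Lemma cvgC_N u a : cvgC abs u a -> cvgC abs (fun n => - u n) (- a).
Proof.
move=> cu e e0; have [N h] := cu e e0; exists N => n hn.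
by rewrite -opprD absN; apply: h.
Qed.

Lemma cvgC_M u v a b : cvgC abs u a -> cvgC abs v b -> cvgC abs (fun n => u n * v n) (a * b).
Proof.
move=> cu cv e e0.
set K := Num.max 1 (abs a) + Num.max 1 (abs b).
have K1 : 1 <= Num.max 1 (abs a) by rewrite le_max lexx.
have K2 : 1 <= Num.max 1 (abs b) by rewrite le_max lexx.
have K0 : 0 < K by rewrite /K; lra.
have eK : 0 < e / K by rewrite divr_gt0.
have m0 : 0 < Num.min (e / K) 1 by rewrite lt_min eK ltr01.
have [N1 h1] := cu _ eK; have [N2 h2] := cv _ m0.
exists (maxn N1 N2) => n; rewrite geq_max => /andP [n1 n2].
have := h2 _ n2; rewrite lt_min => /andP [h2a h2b].
have hvb : abs (v n) <= Num.max 1 (abs b) by apply: abs_bound; exact: ltW.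
have -> : u n * v n - a * b = (u n - a) * v n + a * (v n - b) by ring.
have ha1 : abs a <= Num.max 1 (abs a) by rewrite le_max lexx orbT.
have haK : abs a <= K by rewrite /K; lra.
have hvK : abs (v n) <= K by rewrite /K; lra.
have eKK : e / K * K = e by rewrite divfK ?gt_eqF.
apply: absDlt; rewrite absM.
  apply: (@le_lt_trans _ _ (abs (u n - a) * K)); first by apply: ler_wpM2l => //; apply: abs_ge0.
  by rewrite -[ltRHS]eKK ltr_pM2r // h1.
apply: (@le_lt_trans _ _ (K * abs (v n - b))); first by apply: ler_wpM2r => //; apply: abs_ge0.
by rewrite -[ltRHS]eKK mulrC ltr_pM2r.
Qed.

Lemma cvgC_V v b : b != 0 -> cvgC abs v b -> cvgC abs (fun n => (v n)^-1) b^-1.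
Proof.
move=> b0 cv e e0.
have ab : 0 < abs b by apply: abs_gt0.
have d0 : 0 < Num.min (abs b) (e * (abs b * abs b)) by rewrite lt_min ab mulr_gt0 // mulr_gt0.
have [N h] := cv _ d0; exists N => n hn; have := h _ hn; rewrite lt_min => /andP [h1 h2].
have vb : abs (v n) = abs b by apply: abs_eq; rewrite absB.
have vn0 : v n != 0 by apply/eqP => v0; move: vb; rewrite v0 abs0 => bb; rewrite -bb ltxx in ab.
have -> : (v n)^-1 - b^-1 = (b - v n) / (v n * b) by field; apply/andP.
rewrite absM absV absM vb absB ltr_pdivrMr //; exact: mulr_gt0.
Qed.

Lemma cvgC_uniq u a b : cvgC abs u a -> cvgC abs u b -> a = b.
Proof.
move=> ca cb; apply/eqP/negPn/negP => nab.
have e0 : 0 < abs (a - b) by apply: abs_gt0; rewrite subr_eq0.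
have [N1 h1] := ca _ e0; have [N2 h2] := cb _ e0.
have := absBlt (h2 (maxn N1 N2) (leq_maxr _ _)) (h1 (maxn N1 N2) (leq_maxl _ _)).
have -> : u (maxn N1 N2) - b - (u (maxn N1 N2) - a) = a - b by ring.
by rewrite ltxx.
Qed.

Lemma cvgC_ev u v a : (exists N, forall n, (N <= n)%N -> u n = v n) -> cvgC abs u a -> cvgC abs v a.
Proof.
move=> [N hN] cu e e0; have [M hM] := cu e e0; exists (maxn N M) => n.
rewrite geq_max => /andP [h1 h2]; rewrite -hN //; exact: hM.
Qed.

Definition proj (n m : C) : P1 C := if m == 0 then None else Some (n / m).

Lemma mob_Some a b c d w : mob a b c d (Some w) = proj (a * w + b) (c * w + d).
Proof. by []. Qed.
Lemma mob_None a b c d : mob a b c d None = proj a c.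
Proof. by []. Qed.

Lemma proj_scale l n m : l != 0 -> proj (l * n) (l * m) = proj n m.
Proof.
move=> l0; rewrite /proj mulf_eq0 (negbTE l0) /=.
case: ifP => // m0; congr Some; field; apply/andP; split => //; exact/negbT.
Qed.

Lemma proj_rep (z : P1 C) : exists n m, ((n != 0) || (m != 0)) /\ z = proj n m.
Proof.
case: z => [w|]; first by exists w, 1; rewrite oner_neq0 orbT /proj oner_eq0 divr1.
by exists 1, 0; rewrite oner_neq0 /proj eqxx.
Qed.

Lemma mob_proj a b c d n m : (n != 0) || (m != 0) ->
  mob a b c d (proj n m) = proj (a * n + b * m) (c * n + d * m).
Proof.
move=> nm; have [m0|m0] := eqVneq m 0.
  rewrite m0 eqxx orbF in nm; rewrite {1}/proj m0 eqxx mob_None !mulr0 !addr0.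
  by rewrite -(proj_scale a c nm) ![n * _]mulrC.
rewrite {1}/proj (negbTE m0) mob_Some -(proj_scale _ _ m0); congr proj; field; exact: m0.
Qed.

Lemma mob_comp (a b c d a' b' c' d' : C) : a' * d' - b' * c' != 0 ->
  mob a b c d \o mob a' b' c' d' =
  mob (a * a' + b * c') (a * b' + b * d') (c * a' + d * c') (c * b' + d * d').
Proof.
move=> det; apply: functional_extensionality => z /=.
have [n [m [nm ->]]] := proj_rep z.
rewrite !mob_proj //; first by congr proj; ring.
apply/negPn/negP => /norP [/negPn/eqP h1 /negPn/eqP h2].
have e1 : (a' * d' - b' * c') * n = d' * (a' * n + b' * m) - b' * (c' * n + d' * m) by ring.
have e2 : (a' * d' - b' * c') * m = a' * (c' * n + d' * m) - c' * (a' * n + b' * m) by ring.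
rewrite h1 h2 !mulr0 subr0 in e1 e2.
move/eqP: e1; rewrite mulf_eq0 (negbTE det) /= => /eqP n0.
move/eqP: e2; rewrite mulf_eq0 (negbTE det) /= => /eqP m0.
by move: nm; rewrite n0 m0 eqxx.
Qed.

Lemma mob_scale (l a b c d : C) : l != 0 -> mob (l * a) (l * b) (l * c) (l * d) = mob a b c d.
Proof.
move=> l0; apply: functional_extensionality => z.
have [n [m [nm ->]]] := proj_rep z.
rewrite !mob_proj // -[RHS](proj_scale _ _ l0); congr proj; ring.
Qed.

Lemma mob_id (l : C) : l != 0 -> mob l 0 0 l = id.
Proof.
move=> l0; rewrite -[l]mulr1 -[0](mulr0 l) mob_scale //.
apply: functional_extensionality => z; have [n [m [nm ->]]] := proj_rep z.
by rewrite mob_proj //= !mul1r !mul0r addr0 add0r.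
Qed.


Notation chord := (chordal abs).
Notation cvgP := (cvgP1 abs).

Lemma M1 (t : C) : 1 <= Num.max 1 (abs t). Proof. by rewrite le_max lexx. Qed.
Lemma Mabs (t : C) : abs t <= Num.max 1 (abs t). Proof. by rewrite le_max lexx orbT. Qed.
Lemma M0 (t : C) : 0 < Num.max 1 (abs t). Proof. exact: lt_le_trans ltr01 (M1 t). Qed.

Lemma chordal_ge0 (x y : P1 C) : 0 <= chord x y.
Proof.
case: x => [a|]; case: y => [b|] //=; try by rewrite invr_ge0 ltW // M0.
by rewrite divr_ge0 ?abs_ge0 // mulr_ge0 // ltW // M0.
Qed.

Lemma chordal_refl (z : P1 C) : chord z z = 0.
Proof. by case: z => [a|] //=; rewrite subrr abs0 mul0r. Qed.

Lemma cvgP1_cst (z : P1 C) : cvgP (fun _ => z) z.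
Proof. by move=> e e0; exists 0%N => n _; rewrite chordal_refl. Qed.

Lemma cvgP1_sub (u : nat -> P1 C) l (phi : nat -> nat) :
  (forall n, (phi n < phi n.+1)%N) -> cvgP u l -> cvgP (u \o phi) l.
Proof.
move=> inc cu e e0; have [N hN] := cu e e0; exists N => n hn; apply: hN.
have : forall n, (n <= phi n)%N.
  by elim=> [//|k ih]; apply: leq_ltn_trans ih (inc k).
by move=> /(_ n) /(leq_trans hn).
Qed.

Lemma chordal_SS t a : chord (Some t) (Some a) = abs (t - a) / (Num.max 1 (abs t) * Num.max 1 (abs a)).
Proof. by []. Qed.

Lemma chordal_small t a : chord (Some t) (Some a) < (Num.max 1 (abs a))^-1 ->
  abs t <= Num.max 1 (abs a).
Proof.
rewrite chordal_SS => h; rewrite leNgt; apply/negP => ht.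
have hta : abs a < abs t by apply: le_lt_trans (Mabs a) ht.
have h1 : 1 < abs t by apply: le_lt_trans (M1 a) ht.
have e1 : abs (t - a) = abs t by apply: abs_eq; rewrite opprB addrC subrK.
have e2 : Num.max 1 (abs t) = abs t by rewrite max_r // ltW.
move: h; rewrite e1 e2 invfM mulrA divff ?mul1r ?ltxx //.
by rewrite gt_eqF // (lt_trans ltr01 h1).
Qed.

Lemma chordal_bound t a : abs t <= Num.max 1 (abs a) ->
  abs (t - a) <= chord (Some t) (Some a) * (Num.max 1 (abs a) * Num.max 1 (abs a)).
Proof.
move=> ht; rewrite chordal_SS.
have P : 0 < Num.max 1 (abs t) * Num.max 1 (abs a) by rewrite mulr_gt0 ?M0.
have P0 : Num.max 1 (abs t) * Num.max 1 (abs a) != 0 by rewrite gt_eqF.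
rewrite -[leLHS](divfK P0).
apply: ler_wpM2l; first by rewrite divr_ge0 ?abs_ge0 ?ltW.
apply: ler_wpM2r; first exact: ltW (M0 a).
by rewrite ge_max M1 ht.
Qed.

Lemma cvgP1_Some (u : nat -> P1 C) a : cvgP u (Some a) ->
  exists N, (forall n, (N <= n)%N -> u n != None) /\ cvgC abs (fun n => odflt 0 (u n)) a.
Proof.
move=> cu; set A := Num.max 1 (abs a).
have A0 : 0 < A := M0 a.
have Ai : 0 < A^-1 by rewrite invr_gt0.
have [N0 h0] := cu _ Ai.
have notNone : forall n, (N0 <= n)%N -> exists t, u n = Some t /\ abs t <= A.
  move=> n hn; have := h0 n hn; case: (u n) => [t|] /=; last by rewrite ltxx.
  by move=> /chordal_small ht; exists t.
exists N0; split; first by move=> n /notNone [t [-> _]].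
move=> e e0.
have e'0 : 0 < Num.min A^-1 (e / (A * A)) by rewrite lt_min invr_gt0 A0 divr_gt0 // mulr_gt0.
have [N hN] := cu _ e'0; exists (maxn N0 N) => n; rewrite geq_max => /andP [n0 nN].
have [t [ut ht]] := notNone n n0; have := hN n nN; rewrite ut /= lt_min => /andP [_ h].
apply: le_lt_trans (chordal_bound ht) _.
by move: h; rewrite ltr_pdivlMr ?mulr_gt0.
Qed.

Lemma cvgP1_uniq (u : nat -> P1 C) l1 l2 : cvgP u l1 -> cvgP u l2 -> l1 = l2.
Proof.
have key : forall a, cvgP u (Some a) -> cvgP u None -> False.
  move=> a ca cn; have [N [hN cv]] := cvgP1_Some ca.
  have [N1 h1] := cv 1 ltr01.
  have Ai : 0 < (Num.max 1 (abs a))^-1 by rewrite invr_gt0 M0.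
  have [N2 h2] := cn _ Ai.
  set n := maxn N (maxn N1 N2).
  have hn1 : (N1 <= n)%N by rewrite /n leq_max leq_maxl orbT.
  have hn2 : (N2 <= n)%N by rewrite /n leq_max leq_maxr orbT.
  have hn : (N <= n)%N by rewrite /n leq_maxl.
  have := hN n hn; have := h1 n hn1; have := h2 n hn2.
  case: (u n) => [t|] //= ht1 ht2 _.
  have := abs_bound (ltW ht2) => hb.
  move: ht1; rewrite ltNge => /negP; apply.
  by rewrite lef_pV2 ?posrE ?M0 // ge_max M1.
case: l1 => [a|]; case: l2 => [b|] // c1 c2.
- have [N1 [_ v1]] := cvgP1_Some c1; have [N2 [_ v2]] := cvgP1_Some c2.
  by rewrite (cvgC_uniq v1 v2).
- by case: (key _ c1 c2).
- by case: (key _ c2 c1).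
Qed.


Lemma chordal_le s t : chord (Some s) (Some t) <= abs (s - t).
Proof.
rewrite chordal_SS ler_pdivrMr ?mulr_gt0 ?M0 //.
apply: ler_peMr; first exact: abs_ge0.
by rewrite -[leLHS]mulr1; apply: ler_pM => //; apply: M1.
Qed.

Lemma cvgC_absev (d : nat -> C) D : D != 0 -> cvgC abs d D ->
  exists N, forall k, (N <= k)%N -> abs (d k) = abs D.
Proof.
move=> D0 cd; have [N hN] := cd _ (abs_gt0 D0); exists N => k hk.
by apply: abs_eq; rewrite absB; apply: hN.
Qed.

Lemma cvgP1_proj (n d : nat -> C) N D : cvgC abs n N -> cvgC abs d D ->
  (N != 0) || (D != 0) -> cvgP (fun k => proj (n k) (d k)) (proj N D).
Proof.
move=> cn cd nz; have [D0|D0] := eqVneq D 0.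
  rewrite D0 eqxx orbF in nz; rewrite D0 /proj eqxx.
  have [K hK] := cvgC_absev nz cn.
  move=> e e0; have eN : 0 < e * abs N by rewrite mulr_gt0 // abs_gt0.
  have [K2 h2] := cd _ eN; exists (maxn K K2) => k; rewrite geq_max => /andP [k1 k2].
  have := h2 k k2; rewrite D0 subr0 => hd.
  case: ifP => [_|/negbT dk0] /=; first by [].
  have nk := hK k k1.
  have Nq : 0 < abs (n k / d k) by rewrite absM absV nk mulr_gt0 ?invr_gt0 ?abs_gt0.
  rewrite -div1r ltr_pdivrMr ?M0 //.
  apply: (@lt_le_trans _ _ (e * abs (n k / d k))); last by apply: ler_wpM2l; [exact: ltW | exact: Mabs].
  by rewrite absM absV nk mulrA ltr_pdivlMr ?abs_gt0 // mul1r.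
rewrite {2}/proj (negbTE D0).
have cq : cvgC abs (fun k => n k * (d k)^-1) (N * D^-1) by apply: cvgC_M => //; exact: cvgC_V.
have [K hK] := cvgC_absev D0 cd.
move=> e e0; have [K2 h2] := cq e e0; exists (maxn K K2) => k; rewrite geq_max => /andP [k1 k2].
have dk0 : d k != 0 by apply/eqP => d0; move: (hK k k1); rewrite d0 abs0 => /esym /abs_eq0; apply/eqP.
rewrite /proj (negbTE dk0); apply: le_lt_trans (chordal_le _ _) _; exact: h2.
Qed.


Lemma det_nz (a b c d x y : C) : a * d - b * c != 0 -> (x != 0) || (y != 0) ->
  (a * x + b * y != 0) || (c * x + d * y != 0).
Proof.
move=> det nm; apply/negPn/negP => /norP [/negPn/eqP h1 /negPn/eqP h2].
have e1 : (a * d - b * c) * x = d * (a * x + b * y) - b * (c * x + d * y) by ring.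
have e2 : (a * d - b * c) * y = a * (c * x + d * y) - c * (a * x + b * y) by ring.
rewrite h1 h2 !mulr0 subr0 in e1 e2.
move/eqP: e1; rewrite mulf_eq0 (negbTE det) /= => /eqP n0.
move/eqP: e2; rewrite mulf_eq0 (negbTE det) /= => /eqP m0.
by move: nm; rewrite n0 m0 eqxx.
Qed.

Lemma mob_cont (a b c d : nat -> C) (a0 b0 c0 d0 : C) z :
  a0 * d0 - b0 * c0 != 0 ->
  cvgC abs a a0 -> cvgC abs b b0 -> cvgC abs c c0 -> cvgC abs d d0 ->
  cvgP (fun n => mob (a n) (b n) (c n) (d n) z) (mob a0 b0 c0 d0 z).
Proof.
move=> det ca cb cc cd; have [x [y [nz ->]]] := proj_rep z.
have e : forall n, mob (a n) (b n) (c n) (d n) (proj x y) = proj (a n * x + b n * y) (c n * x + d n * y).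
  by move=> n; apply: mob_proj.
rewrite (functional_extensionality _ _ e) mob_proj //.
apply: cvgP1_proj; last exact: det_nz.
  by apply: cvgC_D; apply: cvgC_M => //; apply: cvgC_cst.
by apply: cvgC_D; apply: cvgC_M => //; apply: cvgC_cst.
Qed.

Lemma absX (x : C) k : abs (x ^+ k) = abs x ^+ k.
Proof. by elim: k => [|k ih]; rewrite ?expr0 ?abs1 // !exprS absM ih. Qed.

Lemma incr_lt (phi : nat -> nat) : (forall n, (phi n < phi n.+1)%N) ->
  forall i j, (i < j)%N -> (phi i < phi j)%N.
Proof.
move=> inc i; elim=> [//|j ih]; rewrite ltnS leq_eqVlt => /orP [/eqP ->|h] //.
exact: ltn_trans (ih h) (inc j).
Qed.

Lemma incr_comp (phi psi : nat -> nat) : (forall n, (phi n < phi n.+1)%N) ->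
  (forall n, (psi n < psi n.+1)%N) -> forall n, ((phi \o psi) n < (phi \o psi) n.+1)%N.
Proof. by move=> i1 i2 n /=; apply: incr_lt. Qed.

Lemma incr_ge (phi : nat -> nat) : (forall n, (phi n < phi n.+1)%N) -> forall n, (n <= phi n)%N.
Proof. by move=> inc; elim=> [//|k ih]; apply: leq_ltn_trans ih (inc k). Qed.

Lemma choiceN (T : Type) (P : nat -> T -> Prop) :
  (forall n, exists t, P n t) -> exists f : nat -> T, forall n, P n (f n).
Proof.
move=> h; exists (fun n => proj1_sig (constructive_indefinite_description _ (h n))).
by move=> n; case: (constructive_indefinite_description _ (h n)).
Qed.

Lemma bernoulli (h : R) k : 0 <= h -> 1 + k%:R * h <= (1 + h) ^+ k.
Proof.
move=> h0; elim: k => [|k ih]; first by rewrite mul0r addr0 expr0.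
rewrite exprSr; apply: le_trans (_ : (1 + k%:R * h) * (1 + h) <= _); last first.
  by apply: ler_wpM2r => //; lra.
have : 0 <= k%:R * h * h by rewrite mulr_ge0 // mulr_ge0.
rewrite -natr1; nra.
Qed.

Lemma pow_small (t e : R) : 0 <= t < 1 -> 0 < e -> exists k, t ^+ k < e.
Proof.
move=> /andP [t0 t1] e0; have [->|tn0] := eqVneq t 0.
  by exists 1%N; rewrite expr1.
have tp : 0 < t by rewrite lt_def tn0.
set h := t^-1 - 1.
have hp : 0 < h by rewrite /h subr_gt0 invf_gt1.
have b0 : 0 <= e^-1 / h by rewrite divr_ge0 // ltW // invr_gt0.
set k := Num.Def.archi_bound (e^-1 / h).
have hk := archi_boundP b0; exists k.
have th : t^-1 = 1 + h by rewrite /h; ring.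
have := bernoulli k (ltW hp); rewrite -th exprVn => hb.
have ek : e^-1 < (t ^+ k)^-1.
  apply: lt_le_trans hb; move: hk; rewrite ltr_pdivrMr // => hk; lra.
by move: ek; rewrite ltf_pV2 ?posrE ?exprn_gt0.
Qed.


Section Field.
Variable (F : C -> Prop).
Hypothesis hF : embedded_local_field abs F.

Lemma sf : is_subfield F. Proof. by case: hF. Qed.
Lemma sf0 : F 0. Proof. by case: sf. Qed.
Lemma sf1 : F 1. Proof. by case: sf. Qed.
Lemma sfB x y : F x -> F y -> F (x - y). Proof. by case: sf => _ _ h _ _; apply: h. Qed.
Lemma sfM x y : F x -> F y -> F (x * y). Proof. by case: sf => _ _ _ h _; apply: h. Qed.
Lemma sfV x : F x -> F x^-1.
Proof.
have [->|nz] := eqVneq x 0; first by rewrite invr0.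
by case: sf => _ _ _ _ h; move=> fx; apply: h.
Qed.
Lemma sfN x : F x -> F (- x). Proof. by move=> fx; rewrite -sub0r; apply: sfB => //; apply: sf0. Qed.
Lemma sfD x y : F x -> F y -> F (x + y). Proof. by move=> fx fy; rewrite -[y]opprK; apply: sfB => //; apply: sfN. Qed.
Lemma sfDiv x y : F x -> F y -> F (x / y). Proof. by move=> fx fy; apply: sfM => //; apply: sfV. Qed.
Lemma sfX x k : F x -> F (x ^+ k).
Proof. move=> fx; elim: k => [|k ih]; first by rewrite expr0; apply: sf1.
by rewrite exprS; apply: sfM. Qed.

Lemma small_el e : 0 < e -> exists s, [/\ F s, s != 0 & abs s < e].
Proof.
move=> e0; case: hF => _ [pi [fpi /andP [p0 p1]]] _.
have [k hk] : exists k, abs pi ^+ k < e by apply: pow_small => //; rewrite p1 ltW.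
exists (pi ^+ k); split; first exact: sfX.
  by apply: expf_neq0; apply/eqP => h; move: p0; rewrite h abs0 ltxx.
by rewrite absX.
Qed.

Lemma compactF (u : nat -> C) B : 0 < B -> (forall n, F (u n) /\ abs (u n) <= B) ->
  exists phi : nat -> nat, (forall n, (phi n < phi n.+1)%N) /\
    exists l, F l /\ cvgC abs (u \o phi) l.
Proof.
move=> B0 hu; case: hF => _ _ [r [r0 cpt]].
have [s [fs s0 hs]] := small_el (divr_gt0 r0 B0).
have hb : forall n, F (s * u n) /\ abs (s * u n) <= r.
  move=> n; have [fu bu] := hu n; split; first exact: sfM.
  rewrite absM; apply: le_trans (_ : abs s * B <= _).
    by apply: ler_wpM2l => //; apply: abs_ge0.
  by move: hs; rewrite ltr_pdivlMr // => /ltW.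
have [phi [inc [l [[fl _] cl]]]] := cpt _ hb; exists phi; split => //.
exists (s^-1 * l); split; first by apply: sfM => //; apply: sfV.
have e : u \o phi = fun n => s^-1 * ((fun n => s * u n) \o phi) n.
  by apply: functional_extensionality => n /=; rewrite mulrA mulVf // mul1r.
by rewrite e; apply: cvgC_M => //; apply: cvgC_cst.
Qed.

Lemma closedF (u : nat -> C) l : (forall n, F (u n)) -> cvgC abs u l -> F l.
Proof.
move=> fu cu; have [N hN] := cu 1 ltr01.
set B := Num.max 1 (abs l).
have hb : forall n, F (u (n + N)%N) /\ abs (u (n + N)%N) <= B.
  by move=> n; split => //; apply: abs_bound; apply: ltW; apply: hN; rewrite leq_addl.
have [phi [inc [l' [fl' cl']]]] := compactF (M0 l) hb.
have cl : cvgC abs ((fun n => u (n + N)%N) \o phi) l.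
  have := cvgC_sub (phi := fun n => (phi n + N)%N) _ cu; apply.
  by move=> n; rewrite ltn_add2r.
by rewrite (cvgC_uniq cl cl').
Qed.

Lemma inP1_proj n m : F n -> F m -> inP1 F (proj n m).
Proof. by move=> fn fm; rewrite /proj; case: ifP => //= _; apply: sfDiv. Qed.

Lemma mob_P1 a b c d z : F a -> F b -> F c -> F d -> inP1 F z -> inP1 F (mob a b c d z).
Proof.
move=> fa fb fc fd; case: z => [w|] fz; last exact: inP1_proj.
by rewrite mob_Some; apply: inP1_proj; apply: sfD => //; apply: sfM.
Qed.


Lemma nonF : alg_closedC C -> exists w, ~ F w.
Proof.
move=> hac; apply: NNPP => H.
have allF : forall w, F w by move=> w; apply: NNPP => nw; apply: H; exists w.
case: hF => _ [pi [_ /andP [p0 p1]]] _.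
have hr : forall n : nat, exists w, w ^+ n.+1 = pi.
  move=> n; have hs : (1 < size (('X^(n.+1) - pi%:P)%R))%N by rewrite size_XnsubC.
  have [x hx] := hac _ hs.
  by exists x; move: hx; rewrite rootE !hornerE subr_eq0 => /eqP.
have [wf hw] := choiceN hr.
have aw : forall n, abs (wf n) ^+ n.+1 = abs pi by move=> n; rewrite -absX hw.
have w1 : forall n, abs (wf n) <= 1.
  move=> n; rewrite leNgt; apply/negP => h.
  have := exprn_egt1 n.+1 h; rewrite aw /= => h2.
  by move: (lt_trans h2 p1); rewrite ltxx.
have wp : forall n, abs pi <= abs (wf n).
  move=> n; rewrite -(aw n) exprS.
  apply: le_trans (_ : abs (wf n) * 1 <= _); last by rewrite mulr1.
  by apply: ler_wpM2l; [apply: abs_ge0 | apply: exprn_ile1; [apply: abs_ge0 | apply: w1]].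
have [phi [inc [l [_ cl]]]] := compactF (u := wf) ltr01 (fun n => conj (allF _) (w1 n)).
have l0 : l != 0.
  apply/eqP => l0; have [N hN] := cl _ p0; have := hN N (leqnn N).
  by rewrite l0 subr0 /= ltNge wp.
have [K hK] := cvgC_absev l0 cl.
have e1 := hK K (leqnn K); have e2 := hK K.+1 (leqnSn K).
rewrite /= in e1 e2.
set i := phi K in e1; set j := phi K.+1 in e2.
have ij : (i < j)%N by apply: inc.
have ai := aw i; have aj := aw j; rewrite e1 in ai; rewrite e2 in aj.
have ej : (j.+1 = i.+1 + (j - i))%N by rewrite addSn subnKC // ltnW.
rewrite ej exprD ai in aj.
have pn0 : abs pi != 0 by rewrite gt_eqF.
have r1 : abs l ^+ (j - i) = 1.
  by apply: (mulfI pn0); rewrite mulr1.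
move/eqP: r1; rewrite pexpr_eq1 ?subn_gt0 ?abs_ge0 // => /eqP r1.
by move: ai p1; rewrite r1 expr1n => <-; rewrite ltxx.
Qed.


Definition pick2 (x y : C) := if abs x <= abs y then y else x.
Lemma pick2l x y : abs x <= abs (pick2 x y).
Proof. by rewrite /pick2; case: ifP => // _. Qed.
Lemma pick2r x y : abs y <= abs (pick2 x y).
Proof. rewrite /pick2; case: ifP => // /negbT; rewrite -ltNge => /ltW. by []. Qed.
Lemma pick2E x y : pick2 x y = x \/ pick2 x y = y.
Proof. by rewrite /pick2; case: ifP; [right|left]. Qed.

Lemma normalize a b c d g : lift_at F a b c d g ->
  exists t : C * C * C * C, lift_at F t.1.1.1 t.1.1.2 t.1.2 t.2 g /\
    [/\ abs t.1.1.1 <= 1, abs t.1.1.2 <= 1, abs t.1.2 <= 1 & abs t.2 <= 1] /\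
    (t.1.1.1 = 1 \/ t.1.1.2 = 1 \/ t.1.2 = 1 \/ t.2 = 1).
Proof.
move=> [[fa fb fc fd det] ->].
set m := pick2 (pick2 a b) (pick2 c d).
have ha : abs a <= abs m by apply: le_trans (pick2l a b) (pick2l _ _).
have hb : abs b <= abs m by apply: le_trans (pick2r a b) (pick2l _ _).
have hc : abs c <= abs m by apply: le_trans (pick2l c d) (pick2r _ _).
have hd : abs d <= abs m by apply: le_trans (pick2r c d) (pick2r _ _).
have m0 : m != 0.
  apply/eqP => m0; rewrite m0 abs0 in ha hb hc hd.
  have z : forall x, abs x <= 0 -> x = 0.
    by move=> x hx; apply/abs_eq0/eqP; rewrite eq_le hx abs_ge0.
  by move: det; rewrite (z _ ha) (z _ hb) (z _ hc) (z _ hd) !mul0r subrr eqxx.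
have mi0 : m^-1 != 0 by rewrite invr_eq0.
have am : 0 < abs m by apply: abs_gt0.
have le1 : forall x, abs x <= abs m -> abs (m^-1 * x) <= 1.
  by move=> x hx; rewrite absM absV mulrC ler_pdivrMr // mul1r.
have mE : m = a \/ m = b \/ m = c \/ m = d.
  rewrite /m; case: (pick2E (pick2 a b) (pick2 c d)) => ->;
    [case: (pick2E a b) => -> | case: (pick2E c d) => ->]; tauto.
have fm : F m^-1 by apply: sfV; case: mE => [->|[->|[->|->]]].
exists (m^-1 * a, m^-1 * b, m^-1 * c, m^-1 * d) => /=; split; last split.
- split; last by rewrite mob_scale.
  split; try by apply: sfM.
  have -> : m^-1 * a * (m^-1 * d) - m^-1 * b * (m^-1 * c) = m^-1 * m^-1 * (a * d - b * c) by ring.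
  by rewrite !mulf_neq0.
- by split; apply: le1.
- case: mE => [<-|[<-|[<-|<-]]]; rewrite mulVf //; tauto.
Qed.



Lemma cartan (g : nat -> P1 C -> P1 C) (w x0 : C) :
  (forall n, is_PGL2 F (g n)) -> ~ F w -> ~ F x0 ->
  cvgP (fun n => g n (Some w)) (Some x0) ->
  exists phi : nat -> nat, (forall n, (phi n < phi n.+1)%N) /\
   exists (a b c d : nat -> C) (a0 b0 c0 d0 : C),
    [/\ forall n, lift_at F (a n) (b n) (c n) (d n) (g (phi n)),
        lift_at F a0 b0 c0 d0 (mob a0 b0 c0 d0) &
        [/\ cvgC abs a a0, cvgC abs b b0, cvgC abs c c0 & cvgC abs d d0]].
Proof.
move=> hg nw nx cg.
have hn : forall n, exists t : C * C * C * C, lift_at F t.1.1.1 t.1.1.2 t.1.2 t.2 (g n) /\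
    [/\ abs t.1.1.1 <= 1, abs t.1.1.2 <= 1, abs t.1.2 <= 1 & abs t.2 <= 1] /\
    (t.1.1.1 = 1 \/ t.1.1.2 = 1 \/ t.1.2 = 1 \/ t.2 = 1).
  by move=> n; have [a [b [c [d h]]]] := hg n; apply: normalize h.
have [t ht] := choiceN hn.
set A := fun n => (t n).1.1.1; set B := fun n => (t n).1.1.2.
set Cc := fun n => (t n).1.2; set D := fun n => (t n).2.
have hA : forall n, F (A n) /\ abs (A n) <= 1.
  by move=> n; have [[[? ? ? ? ?] _] [[? ? ? ?] _]] := ht n.
have hB : forall n, F (B n) /\ abs (B n) <= 1.
  by move=> n; have [[[? ? ? ? ?] _] [[? ? ? ?] _]] := ht n.
have hC : forall n, F (Cc n) /\ abs (Cc n) <= 1.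
  by move=> n; have [[[? ? ? ? ?] _] [[? ? ? ?] _]] := ht n.
have hD : forall n, F (D n) /\ abs (D n) <= 1.
  by move=> n; have [[[? ? ? ? ?] _] [[? ? ? ?] _]] := ht n.
have [p1 [i1 [a0 [fa0 ca]]]] := compactF ltr01 hA.
have [p2 [i2 [b0 [fb0 cb]]]] := compactF ltr01 (fun n => hB (p1 n)).
have [p3 [i3 [c0 [fc0 cc]]]] := compactF ltr01 (fun n => hC (p1 (p2 n))).
have [p4 [i4 [d0 [fd0 cd]]]] := compactF ltr01 (fun n => hD (p1 (p2 (p3 n)))).
have i34 := incr_comp i3 i4.
have i234 := incr_comp i2 i34.
have i1234 := incr_comp i1 i234.
set phi := p1 \o (p2 \o (p3 \o p4)).
have ca' : cvgC abs (A \o phi) a0 by exact: (cvgC_sub i234 ca).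
have cb' : cvgC abs (B \o phi) b0 by exact: (cvgC_sub i34 cb).
have cc' : cvgC abs (Cc \o phi) c0 by exact: (cvgC_sub i4 cc).
have cd' : cvgC abs (D \o phi) d0 by exact: cd.
have nz : ~ [/\ a0 = 0, b0 = 0, c0 = 0 & d0 = 0].
  case=> z1 z2 z3 z4.
  have [N1 h1] := ca' 1 ltr01; have [N2 h2] := cb' 1 ltr01.
  have [N3 h3] := cc' 1 ltr01; have [N4 h4] := cd' 1 ltr01.
  set n := maxn (maxn N1 N2) (maxn N3 N4).
  have e1 := h1 n (leq_trans (leq_maxl N1 N2) (leq_maxl _ _)).
  have e2 := h2 n (leq_trans (leq_maxr N1 N2) (leq_maxl _ _)).
  have e3 := h3 n (leq_trans (leq_maxl N3 N4) (leq_maxr _ _)).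
  have e4 := h4 n (leq_trans (leq_maxr N3 N4) (leq_maxr _ _)).
  rewrite /= z1 z2 z3 z4 !subr0 in e1 e2 e3 e4.
  have [_ [_ ]] := ht (phi n).
  by rewrite /A /B /Cc /D /= in e1 e2 e3 e4; case=> [E|[E|[E|E]]];
    [move: e1 | move: e2 | move: e3 | move: e4]; rewrite E abs1 ltxx.
have lifts : forall n, lift_at F (A (phi n)) (B (phi n)) (Cc (phi n)) (D (phi n)) (g (phi n)).
  by move=> n; have [h _] := ht (phi n).
set Nn := a0 * w + b0; set Dd := c0 * w + d0.
have nzND : (Nn != 0) || (Dd != 0).
  apply/negPn/negP => /norP [/negPn/eqP hN0 /negPn/eqP hD0]; apply: nz.
  have z : forall x y, F x -> F y -> x * w + y = 0 -> x = 0 /\ y = 0.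
    move=> x y fx fy e; have [x0'|xn] := eqVneq x 0.
      by split => //; move: e; rewrite x0' mul0r add0r.
    exfalso; apply: nw.
    have ey : y = - (x * w) by apply/eqP; rewrite -addr_eq0 addrC e.
    have -> : w = - y / x by rewrite ey; field.
    by apply: sfDiv => //; apply: sfN.
  have [z1 z2] := z _ _ fa0 fb0 hN0; have [z3 z4] := z _ _ fc0 fd0 hD0; by split.
have gE : (fun n => g (phi n) (Some w)) =
    (fun n => proj ((A \o phi) n * w + (B \o phi) n) ((Cc \o phi) n * w + (D \o phi) n)).
  by apply: functional_extensionality => n; have [_ ->] := lifts n.
have c1 : cvgP (fun n => g (phi n) (Some w)) (proj Nn Dd).
  rewrite gE; apply: cvgP1_proj => //; apply: cvgC_D => //; apply: cvgC_M => //; exact: cvgC_cst.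
have c2 : cvgP (fun n => g (phi n) (Some w)) (Some x0) by exact: (cvgP1_sub i1234 cg).
have pe := cvgP1_uniq c1 c2.
have Dd0 : Dd != 0 by move: pe; rewrite /proj; case: ifP.
have x0E : x0 = Nn / Dd by move: pe; rewrite /proj (negbTE Dd0) => -[].
have det0 : a0 * d0 - b0 * c0 != 0.
  apply/negP => /eqP det; apply: nx; rewrite x0E.
  have [c00|cn0] := eqVneq c0 0.
    have Dd' : Dd = d0 by rewrite /Dd c00 mul0r add0r.
    have a00 : a0 = 0.
      by move/eqP: det; rewrite c00 mulr0 subr0 mulf_eq0 -Dd' (negbTE Dd0) orbF => /eqP.
    by rewrite /Nn a00 mul0r add0r Dd'; apply: sfDiv.
  have -> : Nn / Dd = a0 / c0.
    apply/eqP; rewrite eqr_div //; apply/eqP; rewrite /Nn /Dd.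
    by apply/subr0_eq; rewrite -[RHS](oppr0) -det; ring.
  exact: sfDiv.
exists phi; split => //.
exists (A \o phi), (B \o phi), (Cc \o phi), (D \o phi), a0, b0, c0, d0; split => //.
Qed.


End Field.

End NA.


Section Main.
Variables (R : realType) (C : fieldType) (abs : C -> R).
Hypothesis habs : is_nonarch_abs abs.
Variables (S : finType) (F : S -> C -> Prop).
Hypothesis hF : forall q, embedded_local_field abs (F q).
Variables (Gamma : elt C S -> Prop) (S1 : {set S}) (U : elt C S -> Prop).
Hypothesis hGs : is_subgroup F [set: S] Gamma.
Variable L0 : S -> P1 C -> Prop.
Hypothesis hL0 : plectic_wit abs F [set: S] Gamma L0.
Hypothesis hU : open_compact_subgroup abs F (~: S1) U.
Variable out : S -> C.
Hypothesis hout : forall q, ~ F q (out q).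

Notation cvgP := (cvgP1 abs).

Lemma appE (f g : P1 C -> P1 C) z : f \o g = id -> f (g z) = z.
Proof. by move=> h; rewrite -[RHS]/(id z) -h. Qed.

Lemma prS_in (T : {set S}) (g : elt C S) q : q \in T -> prS T g q = g q.
Proof. by rewrite /prS => ->. Qed.
Lemma prS_out (T : {set S}) (g : elt C S) q : q \notin T -> prS T g q = id.
Proof. by rewrite /prS => /negbTE ->. Qed.

Lemma prS_comp (T : {set S}) (g h : elt C S) :
  prS T (fun q => g q \o h q) = fun q => prS T g q \o prS T h q.
Proof. by apply: functional_extensionality => q; rewrite /prS; case: ifP. Qed.

Lemma G_pgl g : Gamma g -> forall q, is_PGL2 (F q) (g q).
Proof. by case: hGs => h _ _ _ /h [h1 _] q; apply: h1; rewrite in_setT. Qed.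
Lemma G_id : Gamma (fun _ => id). Proof. by case: hGs. Qed.
Lemma G_comp g h : Gamma g -> Gamma h -> Gamma (fun q => g q \o h q).
Proof. by case: hGs => _ _ hc _; apply: hc. Qed.
Lemma G_inv g : Gamma g -> exists h, Gamma h /\ forall q, h q \o g q = id /\ g q \o h q = id.
Proof. by case: hGs => _ _ _ hi; apply: hi. Qed.

Lemma Usg : is_subgroup F (~: S1) U. Proof. by case: hU. Qed.
Lemma U_id : U (fun _ => id). Proof. by case: Usg. Qed.
Lemma U_comp g h : U g -> U h -> U (fun q => g q \o h q).
Proof. by case: Usg => _ _ hc _; apply: hc. Qed.

Lemma inv_unique (f g h : P1 C -> P1 C) : g \o f = id -> f \o h = id -> g = h.
Proof.
move=> e1 e2; apply: functional_extensionality => z.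
by rewrite -{1}(appE z e2) (appE _ e1).
Qed.

Lemma invU g k : U (prS (~: S1) g) -> (forall q, k q \o g q = id /\ g q \o k q = id) ->
  U (prS (~: S1) k).
Proof.
move=> ug hk; case: Usg => _ _ _ hinv; have [k' [uk' hk']] := hinv _ ug.
suff -> : prS (~: S1) k = k' by [].
apply: functional_extensionality => q; have [e1 e2] := hk' q; have [f1 f2] := hk q.
case: (boolP (q \in ~: S1)) => qin.
  by rewrite prS_in //; symmetry; apply: inv_unique e1 _; rewrite -(prS_in g qin) in f2.
by rewrite prS_out //; rewrite prS_out // in e1.
Qed.

Lemma mob_inv (h : P1 C -> P1 C) (a b c d : C) : a * d - b * c != 0 ->
  h \o mob a b c d = id -> h = mob d (- b) (- c) a.
Proof.
move=> det e; apply: inv_unique e _.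
rewrite mob_comp; last by have -> : d * a - - b * - c = a * d - b * c by ring.
have -> : a * d + b * - c = a * d - b * c by ring.
have -> : a * - b + b * a = 0 by ring.
have -> : c * d + d * - c = 0 by ring.
have -> : c * - b + d * a = a * d - b * c by ring.
exact: mob_id.
Qed.


Lemma Ulim (eps : nat -> elt C S) (y1 x1 : S -> P1 C) :
  (forall n, Gamma (eps n)) -> injective eps -> (forall n, U (prS (~: S1) (eps n))) ->
  (forall q, q \in S1 -> cvgP (fun n => eps n q (y1 q)) (x1 q)) ->
  exists2 q, q \in S1 & L0 q (x1 q).
Proof.
move=> gE ie uE cE.
case: hU => [usg _ ucpt].
have [phi [inc [u0 uu0 cu]]] := ucpt (fun n => prS (~: S1) (eps n)) uE.
case: usg => _ _ _ uinv; have [k0 [_ hk0]] := uinv _ uu0.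
set y := fun q => if q \in S1 then y1 q else k0 q (Some (out q)).
set x' := fun q => if q \in S1 then x1 q else Some (out q).
have lx : limset abs [set: S] Gamma x'.
  exists y, (eps \o phi); split.
  - by move=> j; apply: gE.
  - by move=> i j /ie /(incr_inj inc).
  - move=> q _; rewrite /y /x'; case: ifP => qS.
      exact (cvgP1_sub inc (cE q qS)).
    have qn : q \in ~: S1 by rewrite in_setC qS.
    have [a [b [c [d [a0 [b0 [c0 [d0 [hl [[_ _ _ _ det0] hl0] [ca cb cc cd]]]]]]]]]] := cu q qn.
    have e : (fun j => (eps \o phi) j q (k0 q (Some (out q)))) =
             (fun j => mob (a j) (b j) (c j) (d j) (k0 q (Some (out q)))).
      by apply: functional_extensionality => j; have [_ <-] := hl j; rewrite /= prS_in.
    rewrite e; have := mob_cont habs (k0 q (Some (out q))) det0 ca cb cc cd.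
    by rewrite -hl0 (appE _ (hk0 q).2).
have [_ hchar] := hL0; have [q' _ hq'] := (hchar x').1 lx.
case: (boolP (q' \in S1)) => qS.
  by exists q' => //; move: hq'; rewrite /x' qS.
exfalso; move: hq'; rewrite /x' (negbTE qS) => hq'.
have [hin _] := hL0; have := hin q' (in_setT q') _ hq'; exact: hout.
Qed.


Lemma dir1 x : limset abs S1 (GammaU S1 Gamma U) x -> exists2 q, q \in S1 & L0 q (x q).
Proof.
move=> [y [h [hG hinj hc]]].
have [gs hgs] := choiceT hG.
apply: (@Ulim gs y x).
- by move=> n; have [] := hgs n.
- move=> i j e; apply: hinj.
  by have [_ _ ->] := hgs i; have [_ _ ->] := hgs j; rewrite e.
- by move=> n; have [] := hgs n.
- move=> q qS.
  have e : (fun n => gs n q (y q)) = (fun n => h n q (y q)).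
    by apply: functional_extensionality => n; have [_ _ ->] := hgs n; rewrite prS_in.
  by rewrite e; apply: hc.
Qed.


Lemma stepA (gam : nat -> elt C S) q yq : (forall n, Gamma (gam n)) ->
  cvgP (fun n => gam n q yq) (Some (out q)) -> exists w, yq = Some w /\ ~ F q w.
Proof.
move=> gG cg; apply: NNPP => H.
have iy : inP1 (F q) yq.
  case: yq cg H => [w|] // _ H; apply: NNPP => nw; apply: H; by exists w.
have iP : forall n, inP1 (F q) (gam n q yq).
  move=> n; have [a [b [c [d [[fa fb fc fd _] ->]]]]] := G_pgl (gG n) q.
  exact: mob_P1 (hF q) _ _ _ _ _ fa fb fc fd iy.
have [N [hN cv]] := cvgP1_Some habs cg.
elim: (@hout q); apply: (closedF habs (hF q) (u := fun n => odflt 0 (gam (n + N)%N q yq))).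
  move=> n; have := iP (n + N)%N; have := hN (n + N)%N (leq_addl _ _).
  by case: (gam (n + N)%N q yq).
have := cvgC_sub (phi := fun n => (n + N)%N) _ cv; apply.
by move=> n; rewrite ltn_add2r.
Qed.

Definition cvgq (q : S) (g : nat -> elt C S) (g0 : elt C S) :=
  exists (a b c d : nat -> C) (a0 b0 c0 d0 : C),
    [/\ forall n, lift_at (F q) (a n) (b n) (c n) (d n) (g n q),
        lift_at (F q) a0 b0 c0 d0 (g0 q) &
        [/\ cvgC abs a a0, cvgC abs b b0, cvgC abs c c0 & cvgC abs d d0]].

Lemma cvgq_sub q g g0 (phi : nat -> nat) : (forall n, (phi n < phi n.+1)%N) ->
  cvgq q g g0 -> cvgq q (g \o phi) g0.
Proof.
move=> inc [a [b [c [d [a0 [b0 [c0 [d0 [hl hl0 [ca cb cc cd]]]]]]]]]].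
exists (a \o phi), (b \o phi), (c \o phi), (d \o phi), a0, b0, c0, d0; split.
- by move=> n; exact: (hl (phi n)).
- exact: hl0.
- by split; [exact: (cvgC_sub inc ca)|exact: (cvgC_sub inc cb)|exact: (cvgC_sub inc cc)|exact: (cvgC_sub inc cd)].
Qed.

Lemma cvgq_ext q g g0 g0' : g0' q = g0 q -> cvgq q g g0 -> cvgq q g g0'.
Proof. by move=> e [a [b [c [d [a0 [b0 [c0 [d0 [hl hl0 hc]]]]]]]]]; exists a, b, c, d, a0, b0, c0, d0; rewrite e. Qed.

Lemma stepB (gam : nat -> elt C S) (y : S -> P1 C) : (forall n, Gamma (gam n)) ->
  (forall q, q \in ~: S1 -> cvgP (fun n => gam n q (y q)) (Some (out q))) ->
  exists psi : nat -> nat, (forall n, (psi n < psi n.+1)%N) /\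
    exists g0, forall q, q \in ~: S1 -> cvgq q (gam \o psi) g0.
Proof.
move=> gG cg.
suff : forall l : seq S, exists psi : nat -> nat, (forall n, (psi n < psi n.+1)%N) /\
    exists g0, forall q, q \in l -> q \in ~: S1 -> cvgq q (gam \o psi) g0.
  move=> /(_ (enum S)) [psi [inc [g0 h]]]; exists psi; split => //; exists g0.
  by move=> q; apply: h; rewrite mem_enum.
elim=> [|q l [psi [inc [g0 ih]]]].
  by exists (fun n => n); split => //; exists (fun _ => id).
case: (boolP (q \in ~: S1)) => qS; last first.
  exists psi; split => //; exists g0 => r; rewrite in_cons => /orP [/eqP ->|rl] rS.
    by rewrite rS in qS.
  exact: ih.
have cq : cvgP (fun n => gam (psi n) q (y q)) (Some (out q)) by exact (cvgP1_sub inc (cg q qS)).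
have [w [yw nw]] := stepA (fun n => gG (psi n)) cq.
rewrite yw in cq.
have [phi [inc2 [a [b [c [d [a0 [b0 [c0 [d0 [hl hl0 hc]]]]]]]]]]] :=
  cartan habs (hF q) (g := fun n => gam (psi n) q) (fun n => G_pgl (gG (psi n)) q) nw (@hout q) cq.
exists (psi \o phi); split; first exact: incr_comp.
exists (fun r => if r == q then mob a0 b0 c0 d0 else g0 r) => r.
rewrite in_cons => /orP [/eqP ->|rl] rS.
  by exists a, b, c, d, a0, b0, c0, d0; rewrite eqxx.
case: (eqVneq r q) => [->|rq].
  by exists a, b, c, d, a0, b0, c0, d0; rewrite eqxx.
apply: cvgq_ext; first by rewrite (negbTE rq).
exact: (cvgq_sub inc2 (ih r rl rS)).
Qed.


Lemma dir2 x q0 : q0 \in S1 -> L0 q0 (x q0) -> limset abs S1 (GammaU S1 Gamma U) x.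
Proof.
move=> q0S hq0.
set x' := fun q => if q \in S1 then x q else Some (out q).
have lx : limset abs [set: S] Gamma x'.
  have [_ hchar] := hL0; apply/(hchar x').2; exists q0; [exact: in_setT | by rewrite /x' q0S].
have [y [gam [gG ginj gc]]] := lx.
have gc' : forall q, q \in ~: S1 -> cvgP (fun n => gam n q (y q)) (Some (out q)).
  move=> q; rewrite in_setC => /negbTE qS; have := gc q (in_setT q); by rewrite /x' qS.
have [psi [ipsi [g0 hg0]]] := stepB gG gc'.
set gp := gam \o psi.
have gpG : forall n, Gamma (gp n) by move=> n; apply: gG.
have [hi hhi] := choiceT (fun n => G_inv (gpG n)).
set zeta := fun k j => (fun q => gp j q \o hi k q).
have zG : forall k j, Gamma (zeta k j) by move=> k j; apply: G_comp => //; have [] := hhi k.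
have claim : exists k, forall N, exists j, (N <= j)%N /\ U (prS (~: S1) (zeta k j)).
  apply: NNPP => H.
  have H' : forall k, exists N, forall j, (N <= j)%N -> ~ U (prS (~: S1) (zeta k j)).
    move=> k; apply: NNPP => H2; apply: H; exists k => N; apply: NNPP => H3; apply: H2.
    exists N => j hj hu; apply: H3; by exists j.
  have [Nf hNf] := choiceT H'.
  pose a := fix a n := match n with 0 => 0%N | n'.+1 => maxn (Nf (a n')) (a n').+1 end.
  have aS : forall n, a n.+1 = maxn (Nf (a n)) (a n).+1 by [].
  have ainc : forall n, (a n < a n.+1)%N by move=> n; rewrite aS leq_maxr.
  have ainc1 : forall n, (a n.+1 < a n.+2)%N by move=> n; apply: ainc.
  set e := fun n => prS (~: S1) (zeta (a n) (a n.+1)).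
  have eU : forall n, ~ U (e n) by move=> n; apply: hNf; rewrite aS leq_maxl.
  case: hU => _ hopen _.
  have ein : forall n, in_PGL2 F (~: S1) (e n).
    move=> n; split => q qS; last by rewrite /e prS_out.
    by rewrite /e prS_in //; apply: G_pgl.
  have ecv : cvg_PGL2 abs F (~: S1) e (fun _ => id).
    move=> q qS.
    have [A [B [Cc [D [a0 [b0 [c0 [d0 [hl [[fa0 fb0 fc0 fd0 det0] _] [ca cb cc cd]]]]]]]]]] := hg0 q qS.
    have hiE : forall k, hi k q = mob (D k) (- B k) (- Cc k) (A k).
      move=> k; have [[_ _ _ _ dk] ek] := hl k; apply: mob_inv => //.
      by rewrite -ek; exact: ((hhi k).2 q).1.
    have s0 : forall (X : nat -> C) x, cvgC abs X x -> cvgC abs (fun n => X (a n)) x.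
      by move=> X x0 h; exact (cvgC_sub ainc h).
    have s1 : forall (X : nat -> C) x, cvgC abs X x -> cvgC abs (fun n => X (a n.+1)) x.
      by move=> X x0 h; exact (cvgC_sub (phi := fun n => a n.+1) ainc1 h).
    have FqD := sfD (hF q); have FqM := sfM (hF q); have FqN := sfN (hF q).
    exists (fun n => A (a n.+1) * D (a n) + B (a n.+1) * - Cc (a n)),
           (fun n => A (a n.+1) * - B (a n) + B (a n.+1) * A (a n)),
           (fun n => Cc (a n.+1) * D (a n) + D (a n.+1) * - Cc (a n)),
           (fun n => Cc (a n.+1) * - B (a n) + D (a n.+1) * A (a n)),
           (a0 * d0 + b0 * - c0), (a0 * - b0 + b0 * a0), (c0 * d0 + d0 * - c0), (c0 * - b0 + d0 * a0).
    split.
    - move=> n; have [[f1 f2 f3 f4 dt1] e1] := hl (a n.+1); have [[g1 g2 g3 g4 dt2] e2] := hl (a n).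
      split.
        split; try by apply: FqD; apply: FqM => //; apply: FqN.
        set P := (X in X != 0).
        have -> : P = (A (a n.+1) * D (a n.+1) - B (a n.+1) * Cc (a n.+1)) *
                      (A (a n) * D (a n) - B (a n) * Cc (a n)) by rewrite /P; ring.
        exact: mulf_neq0.
      rewrite /e prS_in // /zeta /=.
      rewrite hiE; rewrite /gp /= in e1 *; rewrite e1 mob_comp //.
      by have -> : D (a n) * A (a n) - - B (a n) * - Cc (a n) = A (a n) * D (a n) - B (a n) * Cc (a n) by ring.
    - have -> : a0 * - b0 + b0 * a0 = 0 by ring.
      have -> : c0 * d0 + d0 * - c0 = 0 by ring.
      have -> : a0 * d0 + b0 * - c0 = a0 * d0 - b0 * c0 by ring.
      have -> : c0 * - b0 + d0 * a0 = a0 * d0 - b0 * c0 by ring.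
      split; last by rewrite mob_id.
      split; try by [apply: sf0 (hF q)|apply: FqD; [apply: FqM|apply: FqN; apply: FqM]].
      by rewrite mul0r subr0 mulf_neq0.
    - split.
      + exact: (cvgC_D habs (cvgC_M habs (s1 _ _ ca) (s0 _ _ cd)) (cvgC_M habs (s1 _ _ cb) (cvgC_N habs (s0 _ _ cc)))).
      + exact: (cvgC_D habs (cvgC_M habs (s1 _ _ ca) (cvgC_N habs (s0 _ _ cb))) (cvgC_M habs (s1 _ _ cb) (s0 _ _ ca))).
      + exact: (cvgC_D habs (cvgC_M habs (s1 _ _ cc) (s0 _ _ cd)) (cvgC_M habs (s1 _ _ cd) (cvgC_N habs (s0 _ _ cc)))).
      + exact: (cvgC_D habs (cvgC_M habs (s1 _ _ cc) (cvgC_N habs (s0 _ _ cb))) (cvgC_M habs (s1 _ _ cd) (s0 _ _ ca))).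
  have [N hN] := hopen _ U_id e ein ecv.
  exact: (eU N (hN N (leqnn N))).
have [k hk] := claim.
have [rho [irho hrho]] := extract (hk).
set f := fun n => prS S1 (zeta k (rho n)).
case: (ramsey f) => [[phi [iphi finj]] | [phi [iphi fconst]]].
  exists (fun q => gp k q (y q)), (fun n => f (phi n)); split.
  - by move=> n; exists (zeta k (rho (phi n))); split => //; exact: zG.
  - exact: finj.
  - move=> q qS.
    have e : (fun n => f (phi n) q (gp k q (y q))) = (fun n => gam ((psi \o (rho \o phi)) n) q (y q)).
      apply: functional_extensionality => n; rewrite /f prS_in //= /zeta /=.
      by rewrite (appE _ ((hhi k).2 q).1).
    rewrite e; have := gc q (in_setT q); rewrite /x' qS => h.
    exact (cvgP1_sub (incr_comp ipsi (incr_comp irho iphi)) h).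
exfalso.
set z0 := zeta k (rho (phi 0%N)).
have [iota [iG hiota]] := G_inv (zG k (rho (phi 0%N))).
set eps := fun n => (fun q => iota q \o zeta k (rho (phi n.+1)) q).
have zinj : forall j1 j2, zeta k j1 = zeta k j2 -> j1 = j2.
  move=> j1 j2 e; apply: (incr_inj ipsi); apply: ginj.
  apply: functional_extensionality => q; apply: functional_extensionality => z.
  rewrite -(appE z ((hhi k).2 q).1).
  have := congr1 (fun h => h q (gp k q z)) e; by rewrite /zeta /=.
have [q qS hq] : exists2 q, q \in S1 & L0 q (Some (out q)).
  apply: (@Ulim eps (fun q => Some (out q)) (fun q => Some (out q))).
  - by move=> n; apply: G_comp => //; apply: zG.
  - move=> i j e; have : zeta k (rho (phi i.+1)) = zeta k (rho (phi j.+1)).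
      apply: functional_extensionality => q; apply: functional_extensionality => z.
      rewrite -(appE (zeta k (rho (phi i.+1)) q z) (hiota q).2).
      rewrite -(appE (zeta k (rho (phi j.+1)) q z) (hiota q).2).
      by have := congr1 (fun h => h q z) e; rewrite /eps /= => ->.
    move=> /zinj /(incr_inj irho) /(incr_inj iphi); by case.
  - move=> n; rewrite prS_comp; apply: U_comp; last exact: hrho.
    exact: (invU (hrho (phi 0%N)) hiota).
  - move=> q qS.
    have e : (fun n => eps n q (Some (out q))) = (fun _ => Some (out q)).
      apply: functional_extensionality => n.
      have := congr1 (fun h => h q) (fconst n.+1); rewrite /f /= !prS_in // /eps /= => ->.
      by rewrite (appE _ (hiota q).1).
    by rewrite e; apply: cvgP1_cst.
have [hin _] := hL0; have := hin q (in_setT q) _ hq; exact: hout.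
Qed.


Lemma prS_idf (T : {set S}) : prS T (fun _ => (@id (P1 C))) = fun _ => id.
Proof. by apply: functional_extensionality => q; rewrite /prS; case: ifP. Qed.

Lemma GU_subgroup : is_subgroup F S1 (GammaU S1 Gamma U).
Proof.
split.
- move=> h [g [gG _ ->]]; split => q qS; last by rewrite prS_out.
  by rewrite prS_in //; apply: G_pgl.
- by exists (fun _ => id); split; rewrite ?prS_idf //; [apply: G_id | apply: U_id].
- move=> h1 h2 [g1 [g1G u1 ->]] [g2 [g2G u2 ->]]; exists (fun q => g1 q \o g2 q); split.
  + exact: G_comp.
  + by rewrite prS_comp; apply: U_comp.
  + by rewrite prS_comp.
- move=> h [g [gG ug ->]]; have [k [kG hk]] := G_inv gG.
  exists (prS S1 k); split; first by exists k; split => //; apply: (invU ug hk).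
  move=> q; rewrite /prS; case: ifP => _; [exact: hk | by []].
Qed.

Lemma wit_eq1 (T : {set S}) (A B : S -> P1 C -> Prop) :
  (forall q, q \in T -> forall z, B q z -> inP1 (F q) z) ->
  (forall x : S -> P1 C, (exists2 q, q \in T & A q (x q)) -> (exists2 q, q \in T & B q (x q))) ->
  forall q, q \in T -> forall z, A q z -> B q z.
Proof.
move=> hB hAB q qT z hA.
set x := fun r => if r == q then z else Some (out r).
have hx : exists2 q1, q1 \in T & A q1 (x q1) by exists q => //; rewrite /x eqxx.
have [q' q'T hq'] := hAB x hx.
case: (eqVneq q' q) => [e|ne].
  by move: hq'; rewrite /x e eqxx.
move: hq'; rewrite /x (negbTE ne) => hq'.
by have := hB q' q'T _ hq' => /= h; case: (@hout q' h).
Qed.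

Lemma final_main : plectic abs F S1 (GammaU S1 Gamma U) /\
  (forall L L' : S -> P1 C -> Prop,
     plectic_wit abs F [set: S] Gamma L ->
     plectic_wit abs F S1 (GammaU S1 Gamma U) L' ->
     forall q, q \in S1 -> forall z, L q z <-> L' q z).
Proof.
have main : forall x, limset abs S1 (GammaU S1 Gamma U) x <-> exists2 q, q \in S1 & L0 q (x q).
  by move=> x; split; [exact: dir1 | case=> q0 q0S hq0; exact: (dir2 q0S hq0)].
have L0in : forall q, q \in S1 -> forall z, L0 q z -> inP1 (F q) z.
  by move=> q _ z; apply: hL0.1; rewrite in_setT.
split.
  split; first exact: GU_subgroup.
  by exists L0; split.
move=> L L' [hL1 hL2] [hL1' hL2'] q qS.
have qT : q \in [set: S] by rewrite in_setT.
have a1 := wit_eq1 (A:=L) (B:=L0) (T:=[set: S]) hL0.1 (fun x h => (hL0.2 x).1 ((hL2 x).2 h)) qT.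
have a2 := wit_eq1 (A:=L0) (B:=L) hL1 (fun x h => (hL2 x).1 ((hL0.2 x).2 h)) qT.
have b1 := wit_eq1 (A:=L') (B:=L0) (T:=S1) L0in (fun x h => (main x).1 ((hL2' x).2 h)) qS.
have b2 := wit_eq1 (A:=L0) (B:=L') hL1' (fun x h => (hL2' x).1 ((main x).2 h)) qS.
by split => h; [apply: b2; apply: a1 | apply: a2; apply: b1].
Qed.

End Main.

Theorem proposition2p13 (R : realType) (C : fieldType) (abs : C -> R) (p : nat)
  (hp : prime p) (hC : is_C_field abs p)
  (S : finType) (hS : (0 < #|S|)%N) (F : S -> C -> Prop)
  (hF : forall q, embedded_local_field abs (F q))
  (Gamma : elt C S -> Prop) (hG : plectic abs F [set: S] Gamma)
  (S1 : {set S}) (U : elt C S -> Prop)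
  (hU : open_compact_subgroup abs F (~: S1) U) :
  plectic abs F S1 (GammaU S1 Gamma U) /\
  (forall L L' : S -> P1 C -> Prop,
     plectic_wit abs F [set: S] Gamma L ->
     plectic_wit abs F S1 (GammaU S1 Gamma U) L' ->
     forall q, q \in S1 -> forall z, L q z <-> L' q z).
Proof.
case: hC => habs _ hac _ _.
have [out hout] : exists out : S -> C, forall q, ~ F q (out q).
  by apply: (@choiceT S C (fun q w => ~ F q w)) => q; exact: (nonF habs (hF q) hac).
case: hG => hGs [L0 hL0].
exact: (final_main habs hF hGs hL0 hU hout).
Qed.
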